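(* Let $\tau\in\mathcal A_n$ be a permutation that is not simple. Then there exist $m$ with $2\le m\le n-1$, a simple permutation $\pi\in\mathcal A_m$, and $\sigma\in\mathcal A_{n-m+1}$ such that $\tau=\pi[\sigma]$; moreover the simple permutation $\pi$ is uniquely determined by $\tau$.
   Context: $\mathcal A_{n}$ is the set of permutations $w\in S_{n}$ (one-line notation $w_1\cdots w_n$) avoiding all six vincular patterns below, where $w$ contains - $\underline{32}\,\underline{41}$ if there are $i,j$ with $i+2\le j\le n-1$ and $w_{j+1}<w_{i+1}<w_i<w_j$; - $\underline{14}\,\underline{23}$ if there are such $i,j$ with $w_i<w_j<w_{j+1}<w_{i+1}$; - $\underline{41}\,\underline{32}$ if there are such $i,j$ with $w_{i+1}<w_{j+1}<w_j<w_i$; - $\underline{23}\,\underline{14}$ if there are such $i,j$ with $w_j<w_i<w_{i+1}<w_{j+1}$; - $\underline{23}\,\underline{1}$ if there is $i$ with $i+1\le n-1$ and $w_n<w_i<w_{i+1}$; - $\underline{1}\,\underline{32}$ if there is $j$ with $2\le j\le n-1$ and $w_1<w_{j+1}<w_j$. A permutation $\pi\in S_n$ is simple if there is no interval of positions $\{i,i+1,\dots,j\}$ with $2\le j-i+1\le n-1$ such that $\{\pi_i,\dots,\pi_j\}$ is a set of consecutive integers (so every permutation of length $\le2$ is simple). Inflation at $1$: for $\pi\in S_n$ with $\pi_r=1$ and $\sigma\in S_m$, $\pi[\sigma]=(\pi_1+m-1)\cdots(\pi_{r-1}+m-1)\,\sigma_1\cdots\sigma_m\,(\pi_{r+1}+m-1)\cdots(\pi_n+m-1)\in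 S_{n+m-1}$. *)

(* Defs.v *)
From mathcomp Require Import all_boot.
Set Implicit Arguments. Unset Strict Implicit. Unset Printing Implicit Defensive.

Definition is_perm (n : nat) (w : seq nat) : Prop := perm_eq w (iota 1 n).

(* 1-based access: w_i *)
Definition ent (w : seq nat) (i : nat) : nat := nth 0 w i.-1.

Definition contains_3241 (w : seq nat) : Prop :=
  exists i j, [/\ 1 <= i, i + 2 <= j, j <= (size w).-1 &
    [/\ ent w j.+1 < ent w i.+1, ent w i.+1 < ent w i & ent w i < ent w j]].
Definition contains_1423 (w : seq nat) : Prop :=
  exists i j, [/\ 1 <= i, i + 2 <= j, j <= (size w).-1 &
    [/\ ent w i < ent w j, ent w j < ent w j.+1 & ent w j.+1 < ent w i.+1]].
Definition contains_4132 (w : seq nat) : Prop :=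
  exists i j, [/\ 1 <= i, i + 2 <= j, j <= (size w).-1 &
    [/\ ent w i.+1 < ent w j.+1, ent w j.+1 < ent w j & ent w j < ent w i]].
Definition contains_2314 (w : seq nat) : Prop :=
  exists i j, [/\ 1 <= i, i + 2 <= j, j <= (size w).-1 &
    [/\ ent w j < ent w i, ent w i < ent w i.+1 & ent w i.+1 < ent w j.+1]].
Definition contains_231 (w : seq nat) : Prop :=
  exists i, [/\ 1 <= i, i.+1 <= (size w).-1,
    ent w (size w) < ent w i & ent w i < ent w i.+1].
Definition contains_132 (w : seq nat) : Prop :=
  exists j, [/\ 2 <= j, j <= (size w).-1,
    ent w 1 < ent w j.+1 & ent w j.+1 < ent w j].

Definition inA (n : nat) (w : seq nat) : Prop :=
  is_perm n w /\
  [/\ ~ contains_3241 w, ~ contains_1423 w, ~ contains_4132 w,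
      ~ contains_2314 w & (~ contains_231 w /\ ~ contains_132 w)].

Definition consecutive_block (w : seq nat) (i j : nat) : Prop :=
  exists a, perm_eq (take (j - i + 1) (drop i.-1 w)) (iota a (j - i + 1)).

Definition simple (w : seq nat) : Prop :=
  forall i j, 1 <= i -> i <= j -> j <= size w ->
    2 <= j - i + 1 -> j - i + 1 <= (size w).-1 -> ~ consecutive_block w i j.

(* inflation of pi at its entry 1 by sigma *)
Definition inflate (pi sigma : seq nat) : seq nat :=
  let r := index 1 pi in
  [seq x + (size sigma).-1 | x <- take r pi] ++ sigma ++
  [seq x + (size sigma).-1 | x <- drop r.+1 pi].

(* Main.v *)
Require Import Defs.
From mathcomp Require Import all_boot zify.
From Stdlib Require Import Classical.
Set Implicit Arguments. Unset Strict Implicit. Unset Printing Implicit Defensive.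

Section Basics.
Variables (n : nat) (w : seq nat).
Hypothesis hp : is_perm n w.

Lemma p_size : size w = n.
Proof. by rewrite (perm_size hp) size_iota. Qed.

Lemma p_uniq : uniq w.
Proof. by rewrite (perm_uniq hp) iota_uniq. Qed.

Lemma p_range x : 1 <= x <= n -> 1 <= ent w x <= n.
Proof.
move=> hx; have : ent w x \in w by rewrite /ent mem_nth // p_size; lia.
by rewrite (perm_mem hp) mem_iota; lia.
Qed.

Lemma p_inj x y : 1 <= x <= n -> 1 <= y <= n -> ent w x = ent w y -> x = y.
Proof.
move=> hx hy; rewrite /ent => /eqP; rewrite nth_uniq ?p_size ?p_uniq; try lia.
Qed.

Lemma p_onto v : 1 <= v <= n -> exists x, 1 <= x <= n /\ ent w x = v.
Proof.
move=> hv; have : v \in w by rewrite (perm_mem hp) mem_iota; lia.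
move=> hin; exists (index v w).+1; split.
  by move: hin; rewrite -index_mem p_size; lia.
by rewrite /ent /= nth_index.
Qed.
End Basics.

Lemma blockseq w q l : 1 <= q -> q.-1 + l <= size w ->
  take l (drop q.-1 w) = map (ent w) (iota q l).
Proof.
move=> hq hl; apply: (@eq_from_nth _ 0).
  rewrite size_takel ?size_drop ?size_map ?size_iota //; lia.
move=> i; rewrite size_takel ?size_drop; last lia. move=> hi.
rewrite nth_take; last lia.
rewrite nth_drop (nth_map 0); last (rewrite size_iota; lia).
rewrite nth_iota; last lia. rewrite /ent; congr nth; lia.
Qed.

Lemma perm_of_ent n w : size w = n ->
  (forall x, 1 <= x <= n -> 1 <= ent w x <= n) ->
  (forall x y, 1 <= x <= n -> 1 <= y <= n -> ent w x = ent w y -> x = y) ->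
  is_perm n w.
Proof.
move=> hs hr hi.
have hw : w = map (ent w) (iota 1 n).
  by rewrite -(blockseq (w:=w) (q:=1)) //= ?drop0 ?take_oversize ?hs.
have hu : uniq w.
  rewrite hw map_inj_in_uniq ?iota_uniq // => x y; rewrite !mem_iota => hx hy.
  apply: hi; lia.
have hsub : {subset w <= iota 1 n}.
  move=> v; rewrite hw => /mapP [x]; rewrite !mem_iota => hx ->.
  have := hr x; lia.
have [_ he] := uniq_min_size hu hsub (eq_leq (etrans (size_iota _ _) (esym hs))).
by apply: uniq_perm => //; rewrite iota_uniq.
Qed.

Definition IB w q l := 1 <= q /\ q + l <= (size w).+1 /\
  forall x, q <= x < q + l -> ent w x <= l.

Lemma map_ent_sub n w q l v : is_perm n w -> 1 <= q -> q + l <= n.+1 ->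
  (forall x, q <= x < q + l -> v <= ent w x < v + l) ->
  map (ent w) (iota q l) =i iota v l.
Proof.
move=> hp hq hl hv.
have hu : uniq (map (ent w) (iota q l)).
  rewrite map_inj_in_uniq ?iota_uniq // => x y; rewrite !mem_iota => hx hy.
  apply: (p_inj hp); lia.
have hsub : {subset map (ent w) (iota q l) <= iota v l}.
  move=> u /mapP [x]; rewrite !mem_iota => hx ->; have := hv x; lia.
have hsz : size (iota v l) <= size (map (ent w) (iota q l)) by rewrite size_map !size_iota.
by have [_ he] := uniq_min_size hu hsub hsz.
Qed.

Lemma blk_out n w q l v z : is_perm n w -> 1 <= q -> q + l <= n.+1 ->
  (forall x, q <= x < q + l -> v <= ent w x < v + l) ->
  1 <= z <= n -> v <= ent w z < v + l -> q <= z < q + l.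
Proof.
move=> hp hq hl hv hz hvz.
have := map_ent_sub hp hq hl hv (ent w z); rewrite mem_iota.
have -> : v <= ent w z < v + l by [].
move/mapP => [x]; rewrite mem_iota => hx /(p_inj hp) -> //; lia.
Qed.

Lemma IB_out n w q l z : is_perm n w -> IB w q l -> 1 <= z <= n -> ent w z <= l ->
  q <= z < q + l.
Proof.
move=> hp [hq [hl hv]] hz hvz.
rewrite (p_size hp) in hl.
apply: (blk_out (v:=1) hp) => //.
  move=> x hx; have := hv x hx; have := @p_range _ _ hp x; lia.
have := p_range hp hz; lia.
Qed.

Lemma blk_cb n w q l v : is_perm n w -> 1 <= q -> q + l <= n.+1 -> 1 <= l ->
  (forall x, q <= x < q + l -> v <= ent w x < v + l) ->
  consecutive_block w q (q + l - 1).
Proof.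
move=> hp hq hl hl1 hv; exists v.
have -> : q + l - 1 - q + 1 = l by lia.
rewrite blockseq //; last by rewrite (p_size hp); lia.
apply: uniq_perm; last exact: (map_ent_sub hp hq hl hv).
  rewrite map_inj_in_uniq ?iota_uniq // => x y; rewrite !mem_iota => hx hy.
  apply: (p_inj hp); lia.
by rewrite iota_uniq.
Qed.

Lemma IB_cb n w q l : is_perm n w -> IB w q l -> 1 <= l ->
  consecutive_block w q (q + l - 1).
Proof.
move=> hp [hq [hl hv]] hl1; rewrite (p_size hp) in hl.
apply: (blk_cb (v:=1) hp) => // x hx; have := hv x hx; have := @p_range _ _ hp x; lia.
Qed.

Lemma cb_vals n w i j : is_perm n w -> consecutive_block w i j -> 1 <= i <= j -> j <= n ->
  exists a, (forall x, i <= x <= j -> a <= ent w x < a + (j - i + 1)) /\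
    (forall z, 1 <= z <= n -> a <= ent w z < a + (j - i + 1) -> i <= z <= j) /\
    (forall u, a <= u < a + (j - i + 1) -> exists x, i <= x <= j /\ ent w x = u).
Proof.
move=> hp [a ha] hij hj; exists a.
rewrite blockseq in ha; last by rewrite (p_size hp); lia.
have h1 : forall x, i <= x <= j -> a <= ent w x < a + (j - i + 1).
  move=> x hx; rewrite -mem_iota -(perm_mem ha); apply: map_f; rewrite mem_iota; lia.
split => //; split; last first.
  move=> u hu; have : u \in map (ent w) (iota i (j - i + 1)) by rewrite (perm_mem ha) mem_iota.
  move/mapP => [x]; rewrite mem_iota => hx ->; exists x; split => //; lia.
move=> z hz hvz.
have h2 : forall x, i <= x < i + (j - i + 1) -> a <= ent w x < a + (j - i + 1).
  move=> x hx; apply: h1; lia.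
have := @blk_out n w i (j-i+1) a z hp ltac:(lia) ltac:(lia) h2 hz hvz; lia.
all: lia.
Qed.

Lemma ivt (P Q : nat -> Prop) x y : x <= y -> (forall z, P z -> Q z -> False) ->
  P x -> Q y -> (forall z, x <= z <= y -> P z \/ Q z) ->
  exists q, [/\ x <= q < y, P q & Q q.+1].
Proof.
move=> hle hd; move: {2}(y - x) (erefl (y - x)) => d; elim: d x hle => [|d IH] x hle hy hx hy' hpq.
  have hxy' : y = x by lia.
  by subst y; case: (hd _ hx hy').
case: (hpq x.+1 ltac:(lia)) => h.
  have [q [hq1 hq2 hq3]] := IH x.+1 ltac:(lia) ltac:(lia) h hy' (fun z hz => hpq z ltac:(lia)).
  by exists q; split => //; lia.
by exists x; split => //; lia.
Qed.

Lemma exmin (P : nat -> Prop) k : P k -> exists m, P m /\ forall j, P j -> m <= j.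
Proof.
have : forall K j, j <= K -> P j -> exists m, P m /\ forall j, P j -> m <= j.
  elim=> [|K IH] j hj hP.
    by exists j; split => // i _; lia.
  case: (classic (exists i, P i /\ i < j)) => [[i [hi hij]]|hn].
    by apply: (IH i) => //; lia.
  exists j; split => // i hi; case: (leqP j i) => // hij; exfalso; apply: hn; by exists i.
by move=> h; apply: (h k).
Qed.

Lemma exmax (P : nat -> Prop) N k : P k -> (forall j, P j -> j <= N) ->
  exists m, P m /\ forall j, P j -> j <= m.
Proof.
move=> hk hb.
have hkN := hb k hk.
have hk' : P (N - (N - k)) by have -> : N - (N - k) = k by lia.
have [m [hm1 hm2]] := @exmin (fun d => P (N - d)) (N - k) hk'.
exists (N - m); split => // j hj; have := hm2 (N - j); have := hb j hj.
move=> h1; have -> : N - (N - j) = j by lia.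
move=> h2; have := h2 hj; lia.
Qed.

Lemma IB_mk n w q e v : is_perm n w -> 1 <= q <= e -> e <= n -> v <= n ->
  (forall x, q <= x <= e -> ent w x <= v) ->
  (forall z, 1 <= z <= n -> (z < q \/ e < z) -> v < ent w z) ->
  v = e - q + 1 /\ IB w q (e - q + 1).
Proof.
move=> hp hqe hen hvn hin hout.
have hu : uniq (map (ent w) (iota q (e - q + 1))).
  rewrite map_inj_in_uniq ?iota_uniq // => x y; rewrite !mem_iota => hx hy.
  apply: (p_inj hp); lia.
have h1 : e - q + 1 <= v.
  have := uniq_leq_size hu (s2 := iota 1 v); rewrite size_map !size_iota; apply.
  move=> u /mapP [x]; rewrite !mem_iota => hx ->; have := hin x; have := @p_range _ _ hp x; lia.
have h2 : v <= e - q + 1.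
  have := uniq_leq_size (iota_uniq 1 v) (s2 := map (ent w) (iota q (e - q + 1))).
  rewrite size_map !size_iota; apply => u; rewrite mem_iota => hu1.
  have [z [hz hzu]] := p_onto hp (v := u) ltac:(lia).
  have hzq : q <= z <= e.
    case: (leqP q z) => h3; case: (leqP z e) => h4; try lia;
      have := hout z hz ltac:(lia); lia.
  rewrite -hzu; apply: map_f; rewrite mem_iota; lia.
split; first lia.
split; first lia. split; first by rewrite (p_size hp); lia.
move=> x hx; have := hin x; lia.
Qed.

Definition avoid w := [/\ ~ contains_3241 w, ~ contains_1423 w, ~ contains_4132 w,
      ~ contains_2314 w & (~ contains_231 w /\ ~ contains_132 w)].

Lemma incr_min w s e : (forall t, s <= t < e -> ent w t < ent w t.+1) ->
  forall x, s < x <= e -> ent w s < ent w x.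
Proof.
move=> h x; elim: x => [|x IH] hx; first lia.
case: (ltnP s x) => hsx.
  have := IH ltac:(lia); have := h x ltac:(lia); lia.
have -> : x = s by lia. apply: h; lia.
Qed.

Lemma decr_min w s e : (forall t, s <= t < e -> ent w t.+1 < ent w t) ->
  forall x, s <= x < e -> ent w e < ent w x.
Proof.
move=> h x hx.
have : forall d, d <= e - x -> ent w (e - d) <= ent w e ->  ent w e < ent w x -> True by [].
move=> _.
have H : forall d, d < e - x -> ent w e < ent w (e - d.+1).
  elim=> [|d IH] hd.
    have := h (e - 1) ltac:(lia); have -> : (e - 1).+1 = e by lia. by [].
  have := IH ltac:(lia); have := h (e - d.+2) ltac:(lia).
  have -> : (e - d.+2).+1 = e - d.+1 by lia. lia.
have := H (e - x).-1 ltac:(lia); have -> : e - (e - x).-1.+1 = x by lia. by [].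
Qed.

Ltac fin := repeat split; lia.
Lemma orC' (A B : Prop) : A \/ B -> B \/ A. Proof. tauto. Qed.

Lemma keyL n w s e : is_perm n w -> avoid w -> consecutive_block w s e ->
  1 <= s -> s < e -> e <= n -> e - s + 1 <= n.-1 ->
  exists q l, 2 <= l <= n.-1 /\ IB w q l.
Proof.
move=> hp [h3241 h1423 h4132 h2314 [h231 h132]] hcb hs hse hen hsz.
have hsw := p_size hp.
have [a [hin [hout hatt]]] := cb_vals hp hcb ltac:(lia) hen.
have hinj : forall x y, 1 <= x <= n -> 1 <= y <= n -> x != y -> ent w x != ent w y.
  by move=> x y hx hy hxy; apply/eqP => /(p_inj hp) h; move: hxy; rewrite h ?eqxx //; lia.
case: (leqP a 1) => ha.
  exists s, (e - s + 1); split; first lia.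
  split => //; split; first lia.
  move=> x hx; have := hin x ltac:(lia); lia.
set b := a + (e - s).
have [xb [hxb hxbv]] := hatt b ltac:(lia).
have hbn : b <= n by have := @p_range _ _ hp xb ltac:(lia); lia.
have [r [hr hr1]] := p_onto hp (v := 1) ltac:(lia).
have hrI : r < s \/ e < r.
  case: (ltnP r s) => h1; [by left|]; case: (ltnP e r) => h2; [by right|].
  have := hin r ltac:(lia); lia.
have hLH : forall z, 1 <= z <= n -> (z < s \/ e < z) -> ent w z < a \/ b < ent w z.
  move=> z hz hzo; case: (ltnP (ent w z) a) => h1; [by left|]; case: (ltnP b (ent w z)) => h2; [by right|].
  have := hout z hz ltac:(lia); lia.
have hdLH : forall z, ent w z < a -> b < ent w z -> False by move=> z; lia.
have hdHL : forall z, b < ent w z -> ent w z < a -> False by move=> z; lia.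
case: hrI => hrs.
- have hinc : forall t, s <= t < e -> ent w t < ent w t.+1.
    move=> t ht; case: (ltnP (ent w t) (ent w t.+1)) => // hge.
    have hne := hinj t.+1 t ltac:(lia) ltac:(lia) ltac:(lia).
    have h1 : ent w t.+1 < ent w 1.
      case: (ltnP (ent w t.+1) (ent w 1)) => // h.
      have hne1 := hinj 1 t.+1 ltac:(lia) ltac:(lia) ltac:(lia).
      exfalso; apply: h132; exists t; rewrite hsw; fin.
    have := hin t ltac:(lia); have := hin t.+1 ltac:(lia) => hit1 hit.
    have hH1 : b < ent w 1.
      case: (hLH 1 ltac:(lia) ltac:(lia)) => //; lia.
    have [q [hq hq1 hq2]] := @ivt (fun z => b < ent w z) (fun z => ent w z < a) 1 r
      ltac:(lia) hdHL hH1 ltac:(cbv beta; rewrite hr1; lia)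
      (fun z hz => orC' (hLH z ltac:(lia) ltac:(lia))).
    exfalso; apply: h4132; exists q, t; rewrite hsw; fin.
  have hs1 := hinc s ltac:(lia).
  have := hin s ltac:(lia); have := hin s.+1 ltac:(lia) => his1 his.
  have hright : forall x, e < x <= n -> b < ent w x.
    have hHn : e < n -> b < ent w n.
      move=> hen'; case: (hLH n ltac:(lia) ltac:(lia)) => // hlo.
      exfalso; apply: h231; exists s; rewrite hsw; fin.
    move=> x hx; case: (hLH x ltac:(lia) ltac:(lia)) => // hlo; exfalso.
    have [q [hq hq1 hq2]] := @ivt (fun z => ent w z < a) (fun z => b < ent w z) x n
      ltac:(lia) hdLH hlo (hHn ltac:(lia)) (fun z hz => hLH z ltac:(lia) ltac:(lia)).
    apply: h2314; exists s, q; rewrite hsw; fin.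
  have hleft : forall x y, 1 <= x -> x < y -> y < s -> ent w x < a -> ent w y < a.
    move=> x y hx hxy hys hlo; case: (hLH y ltac:(lia) ltac:(lia)) => // hhi; exfalso.
    have [q [hq hq1 hq2]] := @ivt (fun z => ent w z < a) (fun z => b < ent w z) x y
      ltac:(lia) hdLH hlo hhi (fun z hz => hLH z ltac:(lia) ltac:(lia)).
    apply: h1423; exists q, s; rewrite hsw; fin.
  have hr' : 1 <= r /\ ent w r < a by split; [lia|rewrite hr1; lia].
  have [q0 [[hq0 hq0a] hq0m]] := @exmin (fun z => 1 <= z /\ ent w z < a) r hr'.
  have hq0r : q0 <= r by apply: hq0m; split; [lia|rewrite hr1; lia].
  have hI1 : forall x, q0 <= x <= e -> ent w x <= b.
    move=> x hx; case: (ltnP x s) => hxs.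
      case: (ltnP q0 x) => hqx.
        have := hleft q0 x hq0 hqx hxs hq0a; lia.
      have -> : x = q0 by lia.
      lia.
    have := hin x ltac:(lia); lia.
  have hO1 : forall z, 1 <= z <= n -> (z < q0 \/ e < z) -> b < ent w z.
    move=> z hz [hzq|hze]; last by apply: hright; lia.
    case: (hLH z hz ltac:(lia)) => // hlo.
    have hz1 : 0 < z by lia.
    have := hq0m z (conj hz1 hlo); lia.
  have [hbv hIB] := @IB_mk n w q0 e b hp ltac:(lia) hen hbn hI1 hO1.
  case: (ltnP b n) => hbn'.
    by exists q0, (e - q0 + 1); split => //; lia.
  have hq01 : q0 = 1 by lia.
  have hen' : e = n by lia.
  have hsa : ent w s = a.
    have [x [hx hxa]] := hatt a ltac:(lia).
    case: (ltnP s x) => hsx; last by have -> : s = x by lia.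
    have := @incr_min w s e hinc x ltac:(lia); lia.
  have hsn : s <= n by lia.
  have hI2 : forall x, 1 <= x <= s -> ent w x <= a.
    move=> x hx; case: (ltnP x s) => hxs.
      case: (ltnP q0 x) => hqx.
        have := hleft q0 x hq0 hqx hxs hq0a; lia.
      have -> : x = q0 by lia.
      lia.
    have -> : x = s by lia.
    lia.
  have hO2 : forall z, 1 <= z <= n -> (z < 1 \/ s < z) -> a < ent w z.
    move=> z hz [hz1|hzs]; first lia.
    have := @incr_min w s e hinc z ltac:(lia); lia.
  have [hv2 hIB2] := @IB_mk n w 1 s a hp ltac:(lia) hsn ltac:(lia) hI2 hO2.
  by exists 1, (s - 1 + 1); split => //; lia.
- have hdec : forall t, s <= t < e -> ent w t.+1 < ent w t.
    move=> t ht; case: (ltnP (ent w t.+1) (ent w t)) => // hge.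
    have hne := hinj t.+1 t ltac:(lia) ltac:(lia) ltac:(lia).
    have h1 : ent w t < ent w n.
      case: (ltnP (ent w t) (ent w n)) => // h.
      have hne1 := hinj n t ltac:(lia) ltac:(lia) ltac:(lia).
      exfalso; apply: h231; exists t; rewrite hsw; fin.
    have := hin t ltac:(lia); have := hin t.+1 ltac:(lia) => hit1 hit.
    have hHn : b < ent w n.
      case: (hLH n ltac:(lia) ltac:(lia)) => //; lia.
    have [q [hq hq1 hq2]] := @ivt (fun z => ent w z < a) (fun z => b < ent w z) r n
      ltac:(lia) hdLH ltac:(cbv beta; rewrite hr1; lia) hHn
      (fun z hz => hLH z ltac:(lia) ltac:(lia)).
    exfalso; apply: h2314; exists t, q; rewrite hsw; fin.
  have he1 := hdec e.-1 ltac:(lia).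
  have hee : e.-1.+1 = e by lia.
  rewrite hee in he1.
  have := hin e ltac:(lia); have := hin e.-1 ltac:(lia) => hie1 hie.
  have hleft : forall x, 1 <= x < s -> b < ent w x.
    have hH1 : 1 < s -> b < ent w 1.
      move=> hs1; case: (hLH 1 ltac:(lia) ltac:(lia)) => // hlo.
      exfalso; apply: h132; exists e.-1; rewrite hsw hee; fin.
    move=> x hx; case: (hLH x ltac:(lia) ltac:(lia)) => // hlo; exfalso.
    have [q [hq hq1 hq2]] := @ivt (fun z => b < ent w z) (fun z => ent w z < a) 1 x
      ltac:(lia) hdHL (hH1 ltac:(lia)) hlo (fun z hz => orC' (hLH z ltac:(lia) ltac:(lia))).
    apply: h4132; exists q, e.-1; rewrite hsw hee; fin.
  have hright : forall x y, e < x -> x < y -> y <= n -> ent w y < a -> ent w x < a.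
    move=> x y hx hxy hyn hlo; case: (hLH x ltac:(lia) ltac:(lia)) => // hhi; exfalso.
    have [q [hq hq1 hq2]] := @ivt (fun z => b < ent w z) (fun z => ent w z < a) x y
      ltac:(lia) hdHL hhi hlo (fun z hz => orC' (hLH z ltac:(lia) ltac:(lia))).
    apply: h3241; exists e.-1, q; rewrite hsw hee; fin.
  have hr' : r <= n /\ ent w r < a by split; [lia|rewrite hr1; lia].
  have [q1 [[hq1n hq1a] hq1m]] := @exmax (fun z => z <= n /\ ent w z < a) n r
    hr' (fun j hj => proj1 hj).
  have hq1r : r <= q1 by apply: hq1m; split; [lia|rewrite hr1; lia].
  have hI1 : forall x, s <= x <= q1 -> ent w x <= b.
    move=> x hx; case: (ltnP e x) => hxe.
      case: (ltnP x q1) => hqx.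
        have := hright x q1 hxe hqx hq1n hq1a; lia.
      have -> : x = q1 by lia.
      lia.
    have := hin x ltac:(lia); lia.
  have hO1 : forall z, 1 <= z <= n -> (z < s \/ q1 < z) -> b < ent w z.
    move=> z hz [hzs|hzq]; first by apply: hleft; lia.
    case: (hLH z hz ltac:(lia)) => // hlo.
    have hz1 : z <= n by lia.
    have := hq1m z (conj hz1 hlo); lia.
  have [hbv hIB] := @IB_mk n w s q1 b hp ltac:(lia) hq1n hbn hI1 hO1.
  case: (ltnP b n) => hbn'.
    by exists s, (q1 - s + 1); split => //; lia.
  have hs1 : s = 1 by lia.
  have hq1n' : q1 = n by lia.
  have hea : ent w e = a.
    have [x [hx hxa]] := hatt a ltac:(lia).
    case: (ltnP x e) => hxe; last by have <- : x = e by lia.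
    have := @decr_min w s e hdec x ltac:(lia); lia.
  have hI2 : forall x, e <= x <= n -> ent w x <= a.
    move=> x hx; case: (ltnP e x) => hxe.
      case: (ltnP x n) => hxn.
        have := hright x n hxe hxn (leqnn n) ltac:(rewrite -hq1n'; exact hq1a); lia.
      have -> : x = n by lia.
      rewrite -hq1n'; lia.
    have -> : x = e by lia.
    lia.
  have hO2 : forall z, 1 <= z <= n -> (z < e \/ n < z) -> a < ent w z.
    move=> z hz [hze|hzn]; last lia.
    have := @decr_min w s e hdec z ltac:(lia); lia.
  have [hv2 hIB2] := @IB_mk n w e n a hp ltac:(lia) (leqnn n) ltac:(lia) hI2 hO2.
  by exists e, (n - e + 1); split => //; lia.
Qed.

Definition gL p k x := if x < p then x else x + k.-1.
Definition Hk k v := maxn 1 (v - k.-1).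
Definition pi_of t p k m := map (fun x => Hk k (ent t (gL p k x))) (iota 1 m).

Lemma ent_map (f : nat -> nat) m x : 1 <= x <= m -> ent (map f (iota 1 m)) x = f x.
Proof.
move=> hx; rewrite /ent (nth_map 0); last by rewrite size_iota; lia.
rewrite nth_iota; [congr f; lia|lia].
Qed.

Lemma gL_ge p k x : x <= gL p k x.
Proof. rewrite /gL; case: (ltnP x p) => /= h1; lia. Qed.

Lemma gL_lt2 p k x y : 1 <= k -> x + 2 <= y -> gL p k x + 2 <= gL p k y.
Proof. move=> hk; rewrite /gL; case: (ltnP x p) => h1; case: (ltnP y p) => h2; lia. Qed.

Lemma gL_S p k x : 1 <= k -> x.+1 <> p -> gL p k x.+1 = (gL p k x).+1.
Proof. move=> hk; rewrite /gL; case: (ltnP x p) => h1; case: (ltnP x.+1 p) => h2; lia. Qed.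

Section Decomp.
Variables (n : nat) (t : seq nat) (p k : nat).
Hypothesis hp : is_perm n t.
Hypothesis hIB : IB t p k.
Hypothesis hk : 1 <= k.
Let m := n - k + 1.

Lemma d_bounds : 1 <= p /\ p + k <= n.+1.
Proof. by case: hIB => h1 [h2 _]; rewrite (p_size hp) in h2. Qed.

Lemma d_in x : p <= x < p + k -> ent t x <= k.
Proof. by case: hIB => _ [_ h] /h. Qed.

Lemma d_out z : 1 <= z <= n -> (z < p \/ p + k <= z) -> k < ent t z.
Proof.
move=> hz hzo; case: (ltnP k (ent t z)) => // h.
have := IB_out hp hIB hz h; lia.
Qed.

Lemma d_gL x : 1 <= x <= m -> 1 <= gL p k x <= n /\
  ((x = p /\ ent t (gL p k x) <= k) \/ (x <> p /\ k < ent t (gL p k x))).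
Proof.
move=> hx; have [hp1 hpk] := d_bounds.
rewrite /gL; case: (ltnP x p) => hxp.
  split; first lia. right; split; first lia. apply: d_out; lia.
split; first lia.
case: (ltnP p x) => hpx.
  right; split; first lia; apply: d_out; lia.
left; split; first lia; apply: d_in; lia.
Qed.

Lemma d_pi_perm : is_perm m (pi_of t p k m).
Proof.
apply: perm_of_ent; first by rewrite size_map size_iota.
  move=> x hx; rewrite /pi_of ent_map //.
  have [hg _] := d_gL hx; have := @p_range _ _ hp (gL p k x) hg; rewrite /Hk /m; lia.
move=> x y hx hy; rewrite /pi_of !ent_map //.
have [hgx hcx] := d_gL hx; have [hgy hcy] := d_gL hy.
case: hcx => [[hx1 hx2]|[hx1 hx2]]; case: hcy => [[hy1 hy2]|[hy1 hy2]]; rewrite /Hk.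
- lia.
- lia.
- lia.
move=> h; have h2 : ent t (gL p k x) = ent t (gL p k y) by lia.
have := p_inj hp hgx hgy h2; rewrite /gL; case: (ltnP x p) => h3; case: (ltnP y p) => h4; lia.
Qed.

Lemma d_sigma : take k (drop p.-1 t) = map (ent t) (iota p k).
Proof. have [hp1 hpk] := d_bounds; apply: blockseq; rewrite ?(p_size hp); lia. Qed.

Lemma d_ent_sigma x : 1 <= x <= k -> ent (take k (drop p.-1 t)) x = ent t (x + p.-1).
Proof.
move=> hx; have [hp1 hpk] := d_bounds.
rewrite d_sigma /ent (nth_map 0); last by rewrite size_iota; lia.
rewrite nth_iota; [congr nth; lia|lia].
Qed.

Lemma d_sigma_perm : is_perm k (take k (drop p.-1 t)).
Proof.
have [hp1 hpk] := d_bounds.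
apply: perm_of_ent; first by rewrite d_sigma size_map size_iota.
  move=> x hx; rewrite d_ent_sigma //; have := @p_range _ _ hp (x + p.-1) ltac:(lia).
  have := d_in (x := x + p.-1) ltac:(lia); lia.
move=> x y hx hy; rewrite !d_ent_sigma // => /(p_inj hp); lia.
Qed.

End Decomp.

Lemma Hk_lt k u v : Hk k u < Hk k v -> u < v.
Proof. rewrite /Hk; lia. Qed.

Section Decomp2.
Variables (n : nat) (t : seq nat) (p k : nat).
Hypothesis hp : is_perm n t.
Hypothesis hIB : IB t p k.
Hypothesis hk : 1 <= k.
Hypothesis hkn : k <= n.-1.
Let m := n - k + 1.
Let pi := pi_of t p k m.
Let sg := take k (drop p.-1 t).

Lemma e_size : size pi = m.
Proof. by rewrite size_map size_iota. Qed.

Lemma e_ent x : 1 <= x <= m -> ent pi x = Hk k (ent t (gL p k x)).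
Proof. by move=> hx; rewrite /pi /pi_of ent_map. Qed.

Lemma e_entS x : 1 <= x -> x.+1 <= m -> ent pi x.+1 = Hk k (ent t (gL p k x).+1).
Proof.
move=> hx hxm; rewrite e_ent; last lia.
have [hp1 hpk] := d_bounds hp hIB.
case: (eqVneq x.+1 p) => hxp; last by rewrite gL_S //; apply/eqP.
rewrite /gL; have -> : x < p by lia. have -> : (x.+1 < p) = false by apply/negbTE; lia.
have := d_in hIB (x := x.+1) ltac:(lia); have := d_in hIB (x := x.+1 + k.-1) ltac:(lia).
rewrite /Hk; lia.
Qed.

Lemma e_ent1 : 1 <= m -> ent pi 1 = Hk k (ent t 1).
Proof.
move=> hm; rewrite e_ent; last lia.
have [hp1 hpk] := d_bounds hp hIB.
rewrite /gL; case: (ltnP 1 p) => h //.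
have := d_in hIB (x := 1) ltac:(lia); have := d_in hIB (x := 1 + k.-1) ltac:(lia).
rewrite /Hk; lia.
Qed.

Lemma e_entm : 1 <= m -> ent pi m = Hk k (ent t n).
Proof.
move=> hm; rewrite e_ent; last lia.
have [hp1 hpk] := d_bounds hp hIB.
rewrite /gL; case: (ltnP m p) => h; first lia.
congr (Hk k (ent t _)); rewrite /m; lia.
Qed.

Lemma gL_le x : x <= m.-1 -> gL p k x <= n.-1.
Proof.
have [hp1 hpk] := d_bounds hp hIB.
rewrite /gL /m; case: (ltnP x p) => h; lia.
Qed.

Lemma gL_S_le x : (gL p k x).+1 <= gL p k x.+1.
Proof. rewrite /gL; case: (ltnP x p) => h1; case: (ltnP x.+1 p) => h2; lia. Qed.

Lemma e_pi_avoid : avoid t -> avoid pi.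
Proof.
move=> [h3241 h1423 h4132 h2314 [h231 h132]].
have hsw := p_size hp.
have hm : 2 <= m by rewrite /m; lia.
split; [| | | |split].
- move=> [i [j []]]; rewrite e_size => h1 h2 h3 [].
  rewrite !e_entS ?e_ent; try lia. move=> /Hk_lt h4 /Hk_lt h5 /Hk_lt h6.
  apply: h3241; exists (gL p k i), (gL p k j); rewrite hsw.
  have := gL_ge p k i; have := @gL_lt2 p k i j hk h2; have := gL_le h3; fin.
- move=> [i [j []]]; rewrite e_size => h1 h2 h3 [].
  rewrite !e_entS ?e_ent; try lia. move=> /Hk_lt h4 /Hk_lt h5 /Hk_lt h6.
  apply: h1423; exists (gL p k i), (gL p k j); rewrite hsw.
  have := gL_ge p k i; have := @gL_lt2 p k i j hk h2; have := gL_le h3; fin.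
- move=> [i [j []]]; rewrite e_size => h1 h2 h3 [].
  rewrite !e_entS ?e_ent; try lia. move=> /Hk_lt h4 /Hk_lt h5 /Hk_lt h6.
  apply: h4132; exists (gL p k i), (gL p k j); rewrite hsw.
  have := gL_ge p k i; have := @gL_lt2 p k i j hk h2; have := gL_le h3; fin.
- move=> [i [j []]]; rewrite e_size => h1 h2 h3 [].
  rewrite !e_entS ?e_ent; try lia. move=> /Hk_lt h4 /Hk_lt h5 /Hk_lt h6.
  apply: h2314; exists (gL p k i), (gL p k j); rewrite hsw.
  have := gL_ge p k i; have := @gL_lt2 p k i j hk h2; have := gL_le h3; fin.
- move=> [i []]; rewrite e_size => h1 h2.
  rewrite e_entm ?e_entS ?e_ent; try lia. move=> /Hk_lt h4 /Hk_lt h5.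
  apply: h231; exists (gL p k i); rewrite hsw.
  have := gL_ge p k i; have := gL_S_le i; have := gL_le (x := i.+1) h2; fin.
- move=> [j []]; rewrite e_size => h1 h2.
  rewrite e_ent1 ?e_entS ?e_ent; try lia. move=> /Hk_lt h4 /Hk_lt h5.
  apply: h132; exists (gL p k j); rewrite hsw.
  have := gL_ge p k j; have := gL_le h2; fin.
Qed.

Lemma e_sg_size : size sg = k.
Proof. by rewrite /sg (d_sigma hp hIB hk) size_map size_iota. Qed.

Lemma e_sg_avoid : avoid t -> avoid sg.
Proof.
move=> [h3241 h1423 h4132 h2314 [h231 h132]].
have hsw := p_size hp.
have [hp1 hpk] := d_bounds hp hIB.
have E x : 1 <= x <= k -> ent sg x = ent t (x + p.-1) by move=> hx; rewrite (d_ent_sigma hp hIB hk).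
have ES x : x.+1 <= k -> ent sg x.+1 = ent t (x + p.-1).+1.
  by move=> hx; rewrite E; [congr ent; lia|lia].
split; [| | | |split].
- move=> [i [j []]]; rewrite e_sg_size => h1 h2 h3 [].
  rewrite !ES ?E; try lia. move=> h4 h5 h6.
  apply: h3241; exists (i + p.-1), (j + p.-1); rewrite hsw; fin.
- move=> [i [j []]]; rewrite e_sg_size => h1 h2 h3 [].
  rewrite !ES ?E; try lia. move=> h4 h5 h6.
  apply: h1423; exists (i + p.-1), (j + p.-1); rewrite hsw; fin.
- move=> [i [j []]]; rewrite e_sg_size => h1 h2 h3 [].
  rewrite !ES ?E; try lia. move=> h4 h5 h6.
  apply: h4132; exists (i + p.-1), (j + p.-1); rewrite hsw; fin.
- move=> [i [j []]]; rewrite e_sg_size => h1 h2 h3 [].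
  rewrite !ES ?E; try lia. move=> h4 h5 h6.
  apply: h2314; exists (i + p.-1), (j + p.-1); rewrite hsw; fin.
- move=> [i []]; rewrite e_sg_size => h1 h2.
  rewrite ES ?E; try lia. move=> h4 h5.
  have hk1 : k.-1 + p.-1 + 1 = k + p.-1 by lia.
  case: (ltnP (p + k) n.+1) => hpn.
    have hout := d_out hp hIB hk (z := (k + p.-1).+1) ltac:(lia) ltac:(lia).
    have hin := d_in hIB (x := (i + p.-1).+1) ltac:(lia).
    apply: h2314; exists (i + p.-1), (k + p.-1); rewrite hsw. fin.
  apply: h231; exists (i + p.-1); rewrite hsw.
  have -> : n = k + p.-1 by lia. fin.
- move=> [j []]; rewrite e_sg_size => h1 h2.
  rewrite ES ?E; try lia. move=> h4 h5.
  rewrite ?add0n ?addSn in h4 h5.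
  case: (ltnP 1 p) => hp2.
    have hout := d_out hp hIB hk (z := p.-1) ltac:(lia) ltac:(lia).
    have hin := d_in hIB (x := (j + p.-1).+1) ltac:(lia).
    have hin' := d_in hIB (x := j + p.-1) ltac:(lia).
    apply: h4132; exists p.-1, (j + p.-1); rewrite hsw. fin.
  have hp1' : p = 1 by lia.
  rewrite hp1' /= ?addn0 in h4 h5.
  apply: h132; exists j; rewrite hsw. fin.
Qed.

End Decomp2.

Lemma nth0_ent w i : nth 0 w i = ent w i.+1.
Proof. by []. Qed.

Lemma Hk_inv k v : k < v -> Hk k v + k.-1 = v.
Proof. rewrite /Hk; lia. Qed.

Section Infl.
Variables (n : nat) (t : seq nat) (p k : nat).
Hypothesis hp : is_perm n t.
Hypothesis hIB : IB t p k.
Hypothesis hk : 1 <= k.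
Hypothesis hkn : k <= n.-1.
Let m := n - k + 1.
Let pi := pi_of t p k m.
Let sg := take k (drop p.-1 t).

Lemma e_inflate : t = inflate pi sg.
Proof.
have hsw := p_size hp.
have [hp1 hpk] := d_bounds hp hIB.
have hpu := p_uniq (d_pi_perm hp hIB hk).
have hsz : size pi = m by apply: e_size.
have hpi1 : nth 0 pi p.-1 = 1.
  rewrite nth0_ent prednK // e_ent //; last by rewrite /m; lia.
  have := d_in hIB (x := gL p k p); rewrite /gL ltnn /Hk; lia.
have hidx : index 1 pi = p.-1 by rewrite -hpi1 index_uniq // hsz /m; lia.
rewrite /inflate hidx (e_sg_size hp hIB hk).
have hA : [seq x + k.-1 | x <- take p.-1 pi] = take p.-1 t.
  apply: (@eq_from_nth _ 0).
    rewrite size_map !size_takel ?hsz ?hsw //; rewrite /m; lia.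
  move=> i; rewrite size_map size_takel ?hsz; last by rewrite /m; lia.
  move=> hi; rewrite (nth_map 0) ?size_takel ?hsz; try (rewrite /m; lia).
  rewrite !nth_take // !nth0_ent e_ent; last by rewrite /m; lia.
  rewrite /gL; have -> : i.+1 < p by lia.
  apply: Hk_inv; apply: (d_out hp hIB hk (z := i.+1)); lia.
have hC : [seq x + k.-1 | x <- drop p.-1.+1 pi] = drop k (drop p.-1 t).
  apply: (@eq_from_nth _ 0).
    rewrite size_map !size_drop hsz hsw /m; lia.
  move=> i; rewrite size_map size_drop hsz => hi.
  rewrite (nth_map 0) ?size_drop ?hsz //.
  rewrite !nth_drop !nth0_ent e_ent; last by rewrite /m; lia.
  rewrite /gL; have -> : (p.-1.+1 + i).+1 < p = false by apply/negbTE; lia.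
  rewrite Hk_inv; first by congr ent; lia.
  apply: (d_out hp hIB hk (z := (p.-1.+1 + i).+1 + k.-1)); rewrite /m in hi; lia.
rewrite hA hC.
by rewrite /sg cat_take_drop cat_take_drop.
Qed.

End Infl.

Section Struct.
Variables (t pi sg : seq nat) (m k : nat).
Hypothesis hpi : is_perm m pi.
Hypothesis hsg : is_perm k sg.
Hypothesis hk : 1 <= k.
Hypothesis hm : 1 <= m.
Hypothesis heq : t = inflate pi sg.
Local Notation r := (index 1 pi).

Lemma s_r : r < m /\ ent pi r.+1 = 1.
Proof.
have h1 : 1 \in pi by rewrite (perm_mem hpi) mem_iota; lia.
split; first by rewrite -(p_size hpi) index_mem.
by rewrite /ent /= nth_index.
Qed.

Lemma s_size : size t = m + k - 1.
Proof.
have [hr _] := s_r.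
rewrite heq /inflate !size_cat !size_map size_takel; last by rewrite (p_size hpi); lia.
rewrite size_drop (p_size hsg) (p_size hpi); lia.
Qed.

Lemma s_eq : t = [seq x + k.-1 | x <- take r pi] ++ sg ++ [seq x + k.-1 | x <- drop r.+1 pi].
Proof. by rewrite heq /inflate (p_size hsg). Qed.

Lemma s_A x : 1 <= x <= r -> ent t x = ent pi x + k.-1.
Proof.
have [hr _] := s_r.
move=> hx; rewrite s_eq /ent nth_cat size_map size_takel ?(p_size hpi); last lia.
have -> : x.-1 < r by lia.
by rewrite (nth_map 0) ?nth_take ?size_takel ?(p_size hpi) //; lia.
Qed.

Lemma s_B x : r < x <= r + k -> ent t x = ent sg (x - r).
Proof.
have [hr _] := s_r.
move=> hx; rewrite s_eq /ent nth_cat size_map size_takel ?(p_size hpi); last lia.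
have -> : x.-1 < r = false by apply/negbTE; lia.
rewrite nth_cat (p_size hsg); have -> : x.-1 - r < k by lia.
congr nth; lia.
Qed.

Lemma s_C x : r + k < x <= m + k - 1 -> ent t x = ent pi (x - k.-1) + k.-1.
Proof.
have [hr _] := s_r.
move=> hx; rewrite s_eq /ent nth_cat size_map size_takel ?(p_size hpi); last lia.
have -> : x.-1 < r = false by apply/negbTE; lia.
rewrite nth_cat (p_size hsg); have -> : x.-1 - r < k = false by apply/negbTE; lia.
rewrite (nth_map 0) ?size_drop ?(p_size hpi); last lia.
rewrite nth_drop; congr (nth _ _ _ + _); lia.
Qed.

Lemma s_IB : IB t r.+1 k.
Proof.
have [hr _] := s_r.
split; first lia. split; first by rewrite s_size; lia.
move=> x hx; rewrite s_B; last lia.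
have := @p_range _ _ hsg (x - r) ltac:(lia); lia.
Qed.

Lemma s_pi : pi = pi_of t r.+1 k m.
Proof.
have [hr hr1] := s_r.
apply: (@eq_from_nth _ 0); first by rewrite (p_size hpi) size_map size_iota.
move=> i; rewrite (p_size hpi) => hi.
rewrite !nth0_ent /pi_of ent_map; last lia.
have hne : i.+1 <> r.+1 -> 2 <= ent pi i.+1.
  move=> hir; have := @p_range _ _ hpi i.+1 ltac:(lia).
  have : ent pi i.+1 <> 1.
    by rewrite -hr1 => /(p_inj hpi) => h; apply: hir; apply: h; lia.
  lia.
rewrite /gL; case: (ltnP i.+1 r.+1) => hir.
  rewrite s_A; last lia. have := hne ltac:(lia); rewrite /Hk; lia.
case: (ltnP r.+1 i.+1) => hir2.
  rewrite s_C; last lia.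
  have -> : i.+1 + k.-1 - k.-1 = i.+1 by lia.
  have := hne ltac:(lia); rewrite /Hk; lia.
have hi' : i = r by lia.
rewrite hi' hr1 s_B; last lia.
have := @p_range _ _ hsg (r.+1 + k.-1 - r) ltac:(lia); rewrite /Hk; lia.
Qed.

End Struct.

Theorem mainTheorem14 (n : nat) (tau : seq nat) :
  inA n tau -> ~ simple tau ->
  exists m pi sigma,
    [/\ 2 <= m <= n.-1, inA m pi, simple pi, inA (n - m + 1) sigma &
        tau = inflate pi sigma] /\
    (forall m' pi' sigma', 2 <= m' <= n.-1 -> inA m' pi' -> simple pi' ->
       inA (n - m' + 1) sigma' -> tau = inflate pi' sigma' -> pi' = pi).
Proof.
move=> [hp hav] hns.
have hsw := p_size hp.
have [i [j [[hi hij hj h2 hsz] hcb]]] : exists i j, [/\ 1 <= i, i <= j, j <= size tau,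
    2 <= j - i + 1 & j - i + 1 <= (size tau).-1] /\ consecutive_block tau i j.
  apply: NNPP => H; apply: hns => i j hi hij hj h2 hsz hcb; apply: H.
  by exists i, j; split.
rewrite hsw in hj hsz.
have [q0 [l0 [hl0 hIB0]]] := keyL hp hav hcb hi ltac:(lia) hj hsz.
have [k [[hk2 [p hIB]] hkmax]] := @exmax (fun l => (2 <= l <= n.-1) /\ exists q, IB tau q l)
  n l0 (conj hl0 (ex_intro _ q0 hIB0)) (fun l hl => ltac:(case: hl; lia)).
have hk : 1 <= k by lia.
have hkn : k <= n.-1 by lia.
have [hp1 hpk] := d_bounds hp hIB.
have hpiP := d_pi_perm hp hIB hk.
exists (n - k + 1), (pi_of tau p k (n - k + 1)), (take k (drop p.-1 tau)).
split.
  have -> : n - (n - k + 1) + 1 = k by lia.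
  split.
  - lia.
  - by split => //; apply: e_pi_avoid.
  -
    move=> i1 j1 hi1 hij1 hj1 h21 hsz1 hcb1.
    rewrite e_size in hj1 hsz1.
    have [q [l [hl hIBl]]] := keyL hpiP (e_pi_avoid hp hIB hk hkn hav) hcb1 hi1 ltac:(lia) hj1 hsz1.
    have [hq1 [hql hv]] := hIBl.
    rewrite e_size in hql.
    have hpin : q <= p < q + l.
      apply: (IB_out hpiP hIBl); first lia.
      rewrite e_ent; last lia.
      have [_ hc] := d_gL hp hIB hk (x := p) ltac:(lia).
      case: hc => [[_ h]|[h _]] //; rewrite /Hk; lia.
    have hIBt : IB tau q (l + k.-1).
      split => //; split; first by rewrite hsw; lia.
      move=> y hy.
      case: (ltnP y p) => hyp.
        have := hv y ltac:(lia); rewrite e_ent; last lia.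
        rewrite /gL hyp.
        have := d_out hp hIB hk (z := y) ltac:(lia) ltac:(lia); rewrite /Hk; lia.
      case: (ltnP y (p + k)) => hypk.
        have := d_in hIB (x := y) ltac:(lia); lia.
      have := hv (y - k.-1) ltac:(lia); rewrite e_ent; last lia.
      rewrite /gL; have -> : (y - k.-1 < p) = false by apply/negbTE; lia.
      have -> : y - k.-1 + k.-1 = y by lia.
      have := d_out hp hIB hk (z := y) ltac:(lia) ltac:(lia); rewrite /Hk; lia.
    have hlk : 2 <= l + k.-1 <= n.-1 by lia.
    have := hkmax (l + k.-1) (conj hlk (ex_intro _ q hIBt)); lia.
  - split; first exact: (d_sigma_perm hp hIB hk).
    exact: (e_sg_avoid hp hIB hk hkn hav).
  - exact: (e_inflate hp hIB hk hkn).
move=> m' pi' sg' hm' [hp' hav'] hs' [hsg' hsav'] heq.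
have [k' hk'e] : exists k', k' = n - m' + 1 by eexists.
rewrite -hk'e in hsg'.
have hk' : 1 <= k' by lia.
have hm1 : 1 <= m' by lia.
have hIB' := s_IB hp' hsg' hk' hm1 heq.
have hpi' := s_pi hp' hsg' hk' hm1 heq.
have [hr hr1] := s_r hp' hk' hm1.
have [r hre] : exists r, r = index 1 pi' by eexists.
rewrite -hre in hIB' hpi' hr hr1.
have hkk : k' <= k by apply: hkmax; split; [lia|by exists r.+1].
have [_ [hrk' hv']] := hIB'.
rewrite hsw in hrk'.
have hpr : p <= r.+1 < p + k.
  apply: (IB_out hp hIB); first lia.
  have := hv' r.+1 ltac:(lia); lia.
have hpr2 : p <= r + k' < p + k.
  apply: (IB_out hp hIB); first (lia).
  have := hv' (r + k') ltac:(lia); lia.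
case: (ltnP k' k) => hkk2.
  exfalso.
  have hIBp : IB pi' p (k - k' + 1).
    split; first lia. split; first by rewrite (p_size hp'); lia.
    move=> x hx; rewrite hpi' /pi_of ent_map; last by lia.
    have : ent tau (gL r.+1 k' x) <= k.
      apply: (d_in hIB (x := gL r.+1 k' x)); rewrite /gL; case: (ltnP x r.+1) => h; lia.
    rewrite /Hk; lia.
  have := IB_cb hp' hIBp ltac:(lia).
  apply: hs'; rewrite ?(p_size hp'); lia.
have hkeq : k' = k by lia.
have hpeq : r.+1 = p.
  have hpr3 : r.+1 <= p < r.+1 + k'.
    apply: (IB_out hp hIB'); first lia.
    have := d_in hIB (x := p) ltac:(lia); lia.
  lia.
have hmeq : m' = n - k + 1 by lia.
by rewrite hpi' hpeq hkeq hmeq.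
Qed.
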